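(* Let $k\ge1$ and $n\ge1$. Let $I_1,I'_1,\dots,I_k,I'_k$ be sets of consecutive integers in $\{1,\dots,n\}$ such that for each $i$, $I_i,I'_i$ is a 1-shift pair, and for each $i=2,\dots,k$, $I_i\cap I'_i\supseteq I_{i-1}\cup I'_{i-1}$. Let $A$ be the $2k\times n$ $(0,1)$-matrix whose row $i$ has its 1's exactly in the columns of $I_i$ and whose row $2k+1-i$ has its 1's exactly in the columns of $I'_i$ ($i=1,\dots,k$), and suppose $A$ has no zero column. Let $R$ and $S$ be the row and column sum vectors of $A$. Then $\mathcal{A}(R,S)$ is a convex-class and consists of exactly $2^k$ matrices.
   Context: $\mathcal{A}(R,S)$ is the set of $(0,1)$-matrices with row sum vector $R$ and column sum vector $S$. A $(0,1)$-matrix is convex if in every row and column the 1's occur consecutively; $\mathcal{A}(R,S)$ is a convex-class if every matrix in it is convex. Two intervals $I=\{a,a+1,\dots,b\}$ and $I'=\{a+1,\dots,b+1\}$ with $a<b$ (in either order) form a 1-shift pair. *)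

(* Defs.v *)
From mathcomp Require Import all_boot all_order all_algebra.
Set Implicit Arguments. Unset Strict Implicit. Unset Printing Implicit Defensive.

(* Columns are indexed by 'I_n (0-based: ordinal j stands for column j+1). *)

Definition itv (n a b : nat) : {set 'I_n} := [set j : 'I_n | a <= j <= b].

Definition shift_pair (n : nat) (I J : {set 'I_n}) : Prop :=
  exists a b : nat, [/\ a < b, b.+1 < n &
    ((I = itv n a b /\ J = itv n a.+1 b.+1) \/
     (J = itv n a b /\ I = itv n a.+1 b.+1))].

Definition rowsum m n (M : 'M[bool]_(m, n)) (i : 'I_m) : nat := \sum_(j < n) M i j.
Definition colsum m n (M : 'M[bool]_(m, n)) (j : 'I_n) : nat := \sum_(i < m) M i j.

Definition inAR m n (R : 'I_m -> nat) (S : 'I_n -> nat) (M : 'M[bool]_(m, n)) : bool :=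
  [forall i, rowsum M i == R i] && [forall j, colsum M j == S j].

Definition convex m n (M : 'M[bool]_(m, n)) : Prop :=
  (forall (i : 'I_m) (j1 j j2 : 'I_n), j1 <= j <= j2 -> M i j1 -> M i j2 -> M i j) /\
  (forall (j : 'I_n) (i1 i i2 : 'I_m), i1 <= i <= i2 -> M i1 j -> M i2 j -> M i j).

Definition convex_class m n (R : 'I_m -> nat) (S : 'I_n -> nat) : Prop :=
  forall M : 'M[bool]_(m, n), inAR R S M -> convex M.

(* The 2k x n matrix: (1-based) row i has support I_i and row 2k+1-i has
   support I'_i, for i = 1..k.  With 0-based row r: if r < k it is row i = r+1,
   otherwise it is row 2k+1-i with i = 2k - r. *)
Definition stackA (k n : nat) (I I' : nat -> {set 'I_n}) : 'M[bool]_(k.*2, n) :=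
  \matrix_(r < k.*2, j < n) (if r < k then j \in I r.+1 else j \in I' (k.*2 - r)).

(* Main.v *)
Require Import Defs.
From mathcomp Require Import all_boot all_order all_algebra.
From mathcomp Require Import zify.
Set Implicit Arguments. Unset Strict Implicit. Unset Printing Implicit Defensive.
Import GRing.Theory Num.Theory.

Lemma sumXw m n (X : 'M[bool]_(m, n)) (w : 'I_n -> nat) (c : 'I_m -> nat) :
  (\sum_(r < m) \sum_(j < n) ((X r j : nat)%:R * ((w j)%:R - (c r)%:R)) : int)%R =
  (\sum_(j < n) (w j)%:R * (colsum X j)%:R - \sum_(r < m) (c r)%:R * (rowsum X r)%:R)%R.
Proof.
under eq_bigr => r _ do under eq_bigr => j _ do rewrite mulrBr.
under eq_bigr => r _ do rewrite sumrB.
rewrite sumrB; congr (_ - _)%R.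
  rewrite exchange_big /=; apply: eq_bigr => j _.
  rewrite /colsum natr_sum mulr_sumr; apply: eq_bigr => r _; by rewrite mulrC.
apply: eq_bigr => r _; rewrite /rowsum natr_sum mulr_sumr; apply: eq_bigr => j _; by rewrite mulrC.
Qed.

Lemma lp_lemma m n (A M : 'M[bool]_(m, n)) (c : 'I_m -> nat) :
  (forall r j, A r j -> c r <= colsum A j) ->
  (forall r j, ~~ A r j -> colsum A j <= c r) ->
  inAR (rowsum A) (colsum A) M ->
  forall r j, colsum A j != c r -> M r j = A r j.
Proof.
move=> hA hnA /andP[/forallP hR /forallP hC] r j hne.
pose D r j : int := (((A r j : nat)%:R - (M r j : nat)%:R) * ((colsum A j)%:R - (c r)%:R))%R.
have D0 : forall r j, (0 <= D r j)%R.
  move=> r' j'; rewrite /D.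
  case EA: (A r' j'); case EM: (M r' j') => /=; rewrite ?subrr ?mul0r //.
    rewrite subr0 mul1r subr_ge0 ler_nat; exact: hA.
  rewrite sub0r mulN1r oppr_ge0 subr_le0 ler_nat; apply: hnA; by rewrite EA.
have S0 : (\sum_r \sum_j D r j = 0)%R.
  rewrite /D.
  under eq_bigr => r' _ do under eq_bigr => j' _ do rewrite mulrBl.
  under eq_bigr => r' _ do rewrite sumrB.
  rewrite sumrB (sumXw A (colsum A) c) (sumXw M (colsum A) c).
  have -> : (\sum_(j < n) ((colsum A j)%:R * (colsum M j)%:R : int) = \sum_(j < n) (colsum A j)%:R * (colsum A j)%:R)%R.
    by apply: eq_bigr => j' _; rewrite (eqP (hC j')).
  have -> : (\sum_(r < m) ((c r)%:R * (rowsum M r)%:R : int) = \sum_(r < m) (c r)%:R * (rowsum A r)%:R)%R.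
    by apply: eq_bigr => r' _; rewrite (eqP (hR r')).
  by rewrite subrr.
have Dr0 : (\sum_j D r j = 0)%R.
  apply: (psumr_eq0P (P := xpredT) _ S0) => // r' _; apply: sumr_ge0 => j' _; exact: D0.
have Drj : D r j = 0%R by apply: (psumr_eq0P (P := xpredT) _ Dr0) => // j' _; exact: D0.
move: Drj; rewrite /D => /eqP; rewrite mulf_eq0 => /orP[].
  by rewrite subr_eq0 eqr_nat; case: (A r j); case: (M r j).
by rewrite subr_eq0 eqr_nat (negbTE hne).
Qed.

Definition lev (k r : nat) := if r < k then r else k.*2 - r.+1.

Lemma lev_lt k (r : 'I_(k.*2)) : lev k r < k.
Proof. have := ltn_ord r; rewrite /lev; case: ifP; lia. Qed.

Definition levo k (r : 'I_(k.*2)) : 'I_k := Ordinal (lev_lt r).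

Lemma lev_rev k (r : 'I_(k.*2)) : lev k (rev_ord r) = lev k r.
Proof. have := ltn_ord r; rewrite /lev /=; case: ifP; case: ifP; lia. Qed.

Lemma levo_rev k (r : 'I_(k.*2)) : levo (rev_ord r) = levo r.
Proof. apply: val_inj; exact: lev_rev. Qed.

Lemma stackA_lev k n (I I' : nat -> {set 'I_n}) (r : 'I_(k.*2)) j :
  stackA k I I' r j = if r < k then j \in I (lev k r).+1 else j \in I' (lev k r).+1.
Proof.
rewrite mxE /lev; case: ifP => // h; congr (j \in I' _); have := ltn_ord r; lia.
Qed.

Definition sv n (I I' : nat -> {set 'I_n}) l (j : 'I_n) : nat := (j \in I l.+1) + (j \in I' l.+1).

Lemma colsum_lev k n (I I' : nat -> {set 'I_n}) j :
  colsum (stackA k I I') j = \sum_(l < k) sv I I' l j.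
Proof.
rewrite /colsum.
pose g r := ((if r < k then j \in I r.+1 else j \in I' (k.*2 - r)) : nat).
transitivity (\sum_(0 <= r < k.*2) g r).
  by rewrite big_mkord; apply: eq_bigr => r _; rewrite mxE.
rewrite (big_cat_nat (n := k)) /=; last 2 first.
- by [].
- lia.
rewrite -{2}(add0n k) -addnn big_addn big_mkord.
rewrite (big_nat_rev _ _ 0) /= add0n big_mkord.
rewrite addnK -big_split /=.
apply: eq_bigr => l _; rewrite /g /sv; have := ltn_ord l => hl.
rewrite hl; have -> : (k - l.+1 + k < k) = false by lia.
congr (_ + (j \in I' _ : nat)); lia.
Qed.

Lemma sum_split_at (f : nat -> nat) k l : l < k ->
  \sum_(i < k) f i = \sum_(0 <= i < l) f i + (f l + \sum_(l.+1 <= i < k) f i).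
Proof.
move=> hl; rewrite -(big_mkord xpredT f) (big_cat_nat (n := l)) //=; last by lia.
by congr (_ + _); rewrite big_ltn.
Qed.

Lemma sum_ge (f : nat -> nat) k l : l < k -> (forall l', l < l' < k -> f l' = 2) ->
  f l + (k.-1 - l).*2 <= \sum_(i < k) f i.
Proof.
move=> hl h; rewrite (sum_split_at f hl).
rewrite (eq_big_nat _ _ (m := l.+1) (n := k) (F2 := fun _ => 2)); last by move=> i hi; apply: h; lia.
rewrite sum_nat_const_nat; lia.
Qed.

Lemma sum_le (f : nat -> nat) k l : l < k -> (forall l', l' < l -> f l' = 0) ->
  (forall l', f l' <= 2) -> \sum_(i < k) f i <= f l + (k.-1 - l).*2.
Proof.
move=> hl h0 h2; rewrite (sum_split_at f hl).
rewrite (eq_big_nat _ _ (m := 0) (n := l) (F2 := fun _ => 0)); last by move=> i hi; apply: h0; lia.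
rewrite sum_nat_const_nat muln0 add0n.
have : \sum_(l.+1 <= i < k) f i <= \sum_(l.+1 <= i < k) 2 by apply: leq_sum => i _.
rewrite sum_nat_const_nat; lia.
Qed.

Definition rconvex n (I : {set 'I_n}) : Prop :=
  forall j1 j j2 : 'I_n, j1 <= j <= j2 -> j1 \in I -> j2 \in I -> j \in I.

Lemma itv_conv n a b : rconvex (itv n a b).
Proof. move=> j1 j j2; rewrite !inE; lia. Qed.

Definition xy_prop n (I J : {set 'I_n}) : Prop :=
  exists x y : 'I_n, [/\ x \in I, x \notin J, y \in J, y \notin I &
     forall j, (j \in I) != (j \in J) -> j = x \/ j = y].

Lemma shift_pair_props n (I J : {set 'I_n}) : shift_pair I J ->
  [/\ rconvex I, rconvex J & xy_prop I J].
Proof.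
case=> a [b [hab hbn [[-> ->]|[-> ->]]]]; split; try exact: itv_conv.
  exists (Ordinal (ltn_trans hab (ltnW hbn))), (Ordinal hbn); split; rewrite ?inE /=; try lia.
  move=> j; rewrite !inE.
  case E1: (a <= j <= b); case E2: (a < j <= b.+1) => //= _; [left|right]; apply: val_inj => /=; lia.
exists (Ordinal hbn), (Ordinal (ltn_trans hab (ltnW hbn))); split; rewrite ?inE /=; try lia.
move=> j; rewrite !inE.
case E1: (a <= j <= b); case E2: (a < j <= b.+1) => //= _; [right|left]; apply: val_inj => /=; lia.
Qed.

Lemma sum_split2 n (F : 'I_n -> nat) x y : x != y ->
  \sum_j F j = F x + F y + \sum_(j | (j != x) && (j != y)) F j.
Proof.
move=> hxy; rewrite (bigD1 x) //= (bigD1 (P := fun j => j != x) y) 1?eq_sym //= addnA.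
by congr (_ + _); apply: eq_bigl => j.
Qed.

Lemma pair_lemma n (a b m o : 'I_n -> bool) x y :
  (forall j, a j = b j -> m j = a j /\ o j = b j) ->
  (forall j, a j != b j -> o j = ~~ m j) ->
  \sum_j (m j : nat) = \sum_j (a j : nat) ->
  a x -> ~~ b x -> b y -> ~~ a y ->
  (forall j, a j != b j -> j = x \/ j = y) ->
  (m =1 a /\ o =1 b) \/ (m =1 b /\ o =1 a).
Proof.
move=> h1 h2 hs ax bx by_ ay hxy.
have nxy : x != y by apply/eqP => exy; move: ax ay; rewrite exy => ->.
move: hs; rewrite (sum_split2 m nxy) (sum_split2 a nxy).
rewrite (eq_bigr (fun j => a j : nat)); last first.
  move=> j /andP[jx jy]; have [e|hne] := eqVneq (a j) (b j).
    by rewrite (h1 j e).1.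
  by case: (hxy j hne) => e; [move: jx|move: jy]; rewrite e eqxx.
move/eqP; rewrite eqn_add2r ax (negbTE ay) => /eqP hmxy.
have ox : o x = ~~ m x by apply: h2; rewrite ax bx.
have oy : o y = ~~ m y by apply: h2; rewrite by_ (negbTE ay).
have oth : forall j, j != x -> j != y -> m j = a j /\ o j = b j.
  move=> j jx jy; apply: h1; apply/eqP/negPn/negP => hne.
  by case: (hxy j hne) => e; [move: jx|move: jy]; rewrite e eqxx.
case Emx: (m x) hmxy ox => hmxy ox.
  have Emy : m y = false by move: hmxy; case: (m y).
  left; split => j; (have [->|jx] := eqVneq j x; [by rewrite ?ox ?Emx ?ax ?(negbTE bx)|]);
    (have [->|jy] := eqVneq j y; [by rewrite ?oy ?Emy ?(negbTE ay) ?by_|]); by case: (oth j jx jy).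
have Emy : m y = true by move: hmxy; case: (m y).
right; split => j; (have [->|jx] := eqVneq j x; [by rewrite ?ox ?Emx ?ax ?(negbTE bx)|]);
  (have [->|jy] := eqVneq j y; [by rewrite ?oy ?Emy ?(negbTE ay) ?by_|]).
- have [ea eb] := oth j jx jy; rewrite ea.
  apply/eqP/negPn/negP => hne; by case: (hxy j hne) => e; [move: jx|move: jy]; rewrite e eqxx.
- have [ea eb] := oth j jx jy; rewrite eb.
  apply/eqP/negPn/negP => hne; have hne' : a j != b j by rewrite eq_sym.
  by case: (hxy j hne') => e; [move: jx|move: jy]; rewrite e eqxx.
Qed.

Definition Hsp k n (I I' : nat -> {set 'I_n}) :=
  forall i, 1 <= i <= k -> shift_pair (I i) (I' i).
Definition Hne k n (I I' : nat -> {set 'I_n}) :=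
  forall i, 2 <= i <= k -> (I i.-1 :|: I' i.-1) \subset (I i :&: I' i).

Lemma sv_le2 n (I I' : nat -> {set 'I_n}) l j : sv I I' l j <= 2.
Proof. by rewrite /sv; case: (j \in I l.+1); case: (j \in I' l.+1). Qed.

Lemma sv_step k n (I I' : nat -> {set 'I_n}) : Hne k I I' ->
  forall l j, l.+1 < k -> 0 < sv I I' l j -> sv I I' l.+1 j = 2.
Proof.
move=> Hn l j hl hs.
have sub := Hn l.+2 (ltac:(lia)); rewrite /= in sub.
have : j \in I l.+1 :|: I' l.+1.
  by move: hs; rewrite /sv inE; case: (j \in I l.+1); case: (j \in I' l.+1).
by move/(subsetP sub); rewrite inE /sv => /andP[-> ->].
Qed.

Lemma sv_mono k n (I I' : nat -> {set 'I_n}) : Hne k I I' ->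
  forall l l' j, l < l' < k -> 0 < sv I I' l j -> sv I I' l' j = 2.
Proof.
move=> Hn l l' j /andP[h1 h2] hs.
have e : l' = l.+1 + (l' - l.+1) by lia.
rewrite e; rewrite e in h2; elim: (l' - l.+1) h2 => [|d IH] h2.
  by rewrite addn0; apply: (sv_step Hn) => //; lia.
rewrite addnS; apply: (sv_step Hn); first lia.
by rewrite IH //; lia.
Qed.

Definition cc k l := (k.-1 - l).*2.+1.

Lemma Skey k n (I I' : nat -> {set 'I_n}) : Hne k I I' -> forall l j, l < k ->
  [/\ sv I I' l j = 0 -> colsum (stackA k I I') j < cc k l,
      sv I I' l j = 1 -> colsum (stackA k I I') j = cc k l &
      sv I I' l j = 2 -> cc k l < colsum (stackA k I I') j].
Proof.
move=> Hn l j hl; rewrite colsum_lev.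
have hge : 0 < sv I I' l j -> sv I I' l j + (k.-1 - l).*2 <= \sum_(i < k) sv I I' i j.
  move=> hs; apply: (sum_ge (f := fun i => sv I I' i j) hl) => l' hl'.
  exact: (sv_mono Hn hl' hs).
have hle : sv I I' l j <= 1 -> \sum_(i < k) sv I I' i j <= sv I I' l j + (k.-1 - l).*2.
  move=> hs; apply: (sum_le (f := fun i => sv I I' i j) hl).
    move=> l' hl'; case E: (sv I I' l' j) => [//|s].
    have := sv_mono Hn (l := l') (l' := l) (j := j) (ltac:(lia)) (ltac:(lia)); lia.
  move=> l'; exact: sv_le2.
rewrite /cc; split=> hs.
- have := hle (ltac:(lia)); lia.
- have := hle (ltac:(lia)); have := hge (ltac:(lia)); lia.
- have := hge (ltac:(lia)); lia.
Qed.

Lemma rev_lt k (r : 'I_(k.*2)) : (rev_ord r < k) = ~~ (r < k).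
Proof. have := ltn_ord r; case: (ltnP r k) => h h2 /=; [apply/negbTE; rewrite -leqNgt|]; lia. Qed.

Lemma Arow k n (I I' : nat -> {set 'I_n}) (r : 'I_(k.*2)) j :
  [/\ stackA k I I' r j -> 0 < sv I I' (lev k r) j,
      ~~ stackA k I I' r j -> sv I I' (lev k r) j <= 1,
      sv I I' (lev k r) j = 2 -> stackA k I I' r j &
      sv I I' (lev k r) j != 1 -> stackA k I I' (rev_ord r) j = stackA k I I' r j].
Proof.
rewrite !stackA_lev rev_lt lev_rev /sv.
by case: (r < k); case: (j \in I (lev k r).+1); case: (j \in I' (lev k r).+1).
Qed.

Lemma cc_inj k l l' : l < k -> l' < k -> cc k l = cc k l' -> l = l'.
Proof. rewrite /cc; lia. Qed.

Lemma lp_apply k n (I I' : nat -> {set 'I_n}) : Hne k I I' ->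
  forall M, inAR (rowsum (stackA k I I')) (colsum (stackA k I I')) M ->
  forall (r : 'I_(k.*2)) j, colsum (stackA k I I') j != cc k (lev k r) -> M r j = stackA k I I' r j.
Proof.
move=> Hn M hM; apply: (lp_lemma (c := fun r : 'I_(k.*2) => cc k (lev k r))) => // r j.
  have [h _ _ _] := Arow I I' r j; move/h => hs.
  have [h0 h1 h2] := Skey Hn j (lev_lt r).
  have := sv_le2 I I' (lev k r) j.
  case E: (sv I I' (lev k r) j) hs => [|[|[|]]] //= _ _.
    by rewrite h1.
  by apply: ltnW; rewrite h2.
have [_ h _ _] := Arow I I' r j; move/h => hs.
have [h0 h1 h2] := Skey Hn j (lev_lt r).
case E: (sv I I' (lev k r) j) hs => [|[|]] //= _.
  by apply: ltnW; rewrite h0.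
by rewrite h1.
Qed.

Lemma lp_apply2 k n (I I' : nat -> {set 'I_n}) : Hne k I I' ->
  forall M, inAR (rowsum (stackA k I I')) (colsum (stackA k I I')) M ->
  forall (r : 'I_(k.*2)) j, sv I I' (lev k r) j != 1 -> M r j = stackA k I I' r j.
Proof.
move=> Hn M hM r j hs; apply: (lp_apply Hn hM).
have [h0 h1 h2] := Skey Hn j (lev_lt r).
have := sv_le2 I I' (lev k r) j.
case E: (sv I I' (lev k r) j) hs => [|[|[|]]] //= _ _.
  by have := h0 E; case: ltngtP.
by have := h2 E; case: ltngtP.
Qed.

Lemma ord_dbl k (o : 'I_k) : (o : nat) < k.*2.
Proof. have := ltn_ord o; lia. Qed.

Definition pr k (o : 'I_k) : 'I_(k.*2) := Ordinal (ord_dbl o).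

Lemma lev_pr k (o : 'I_k) : lev k (pr o) = o.
Proof. by rewrite /lev /= ltn_ord. Qed.

Lemma levo_pr k (o : 'I_k) : levo (pr o) = o.
Proof. apply: val_inj; exact: lev_pr. Qed.

Lemma A_pr k n (I I' : nat -> {set 'I_n}) (o : 'I_k) j :
  stackA k I I' (pr o) j = (j \in I o.+1) /\ stackA k I I' (rev_ord (pr o)) j = (j \in I' o.+1).
Proof.
rewrite !stackA_lev rev_lt lev_rev lev_pr /= ltn_ord; done.
Qed.

Lemma pr_cases k (r : 'I_(k.*2)) : r = pr (levo r) \/ r = rev_ord (pr (levo r)).
Proof.
have := ltn_ord r; have e : val (pr (levo r)) = lev k r by [].
case h: (r < k) => hr; [left|right]; apply: val_inj; rewrite /= ?e /lev h //; lia.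
Qed.

Lemma pr_neq k (o : 'I_k) : pr o != rev_ord (pr o).
Proof. apply/eqP => /(congr1 val) /=; have := ltn_ord o; lia. Qed.

Lemma level_props k n (I I' : nat -> {set 'I_n}) : Hsp k I I' -> forall o : 'I_k,
  [/\ rconvex (I o.+1), rconvex (I' o.+1) & xy_prop (I o.+1) (I' o.+1)].
Proof. move=> H o; apply: shift_pair_props; apply: H; have := ltn_ord o; lia. Qed.

Lemma lev_neq k (r : 'I_(k.*2)) (o : 'I_k) : r != pr o -> r != rev_ord (pr o) -> lev k r != o.
Proof.
move=> h1 h2; apply/eqP => e.
have eo : levo r = o by apply: val_inj.
by case: (pr_cases r); rewrite eo => e'; [move: h1|move: h2]; rewrite -e' eqxx.
Qed.

Lemma pair_level k n (I I' : nat -> {set 'I_n}) : Hsp k I I' -> Hne k I I' ->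
  forall M, inAR (rowsum (stackA k I I')) (colsum (stackA k I I')) M ->
  forall o : 'I_k,
  ((M (pr o) =1 stackA k I I' (pr o)) /\ (M (rev_ord (pr o)) =1 stackA k I I' (rev_ord (pr o)))) \/
  ((M (pr o) =1 stackA k I I' (rev_ord (pr o))) /\ (M (rev_ord (pr o)) =1 stackA k I I' (pr o))).
Proof.
move=> Hs Hn M hM o.
have hM' := hM; move: hM' => /andP[/forallP hR /forallP hC].
set A := stackA k I I'.
set p := pr o; set q := rev_ord p.
have levp : lev k p = o by rewrite /p lev_pr.
have levq : lev k q = o by rewrite /q lev_rev /p lev_pr.
have Ap : forall j, A p j = (j \in I o.+1) by move=> j; rewrite /A /p (A_pr I I' o j).1.
have Aq : forall j, A q j = (j \in I' o.+1) by move=> j; rewrite /A /q (A_pr I I' o j).2.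
have [_ _ [x [y [xI xJ yJ yI hxy]]]] := level_props Hs o.
apply: (pair_lemma (a := fun j => A p j) (b := fun j => A q j) (m := fun j => M p j) (o := fun j => M q j) (x := x) (y := y)).
- move=> j /= e.
  have hs : sv I I' (lev k p) j != 1 by rewrite levp /sv -Ap -Aq e; case: (A q j).
  have hs' : sv I I' (lev k q) j != 1 by rewrite levq -levp.
  by split; apply: (lp_apply2 Hn hM).
- move=> j /= hne.
  have sv1 : sv I I' o j = 1 by move: hne; rewrite /sv -Ap -Aq; case: (A p j); case: (A q j).
  have [_ h1 _] := Skey Hn j (ltn_ord o).
  have := eqP (hC j); rewrite /colsum (sum_split2 _ (pr_neq o)) (sum_split2 (fun i => (A i j : nat)) (pr_neq o)).
  rewrite -/p -/q (eq_bigr (fun i => (A i j : nat))); last first.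
    move=> r /andP[r1 r2]; rewrite (lp_apply Hn hM) // (h1 sv1).
    apply/eqP => /(cc_inj (ltn_ord o) (lev_lt r)) e.
    by move: (lev_neq r1 r2); rewrite -e eqxx.
  move/eqP; rewrite eqn_add2r => /eqP.
  move: hne; case: (A p j); case: (A q j); case: (M p j); case: (M q j) => //.
- by rewrite /=; apply/eqP; exact: (hR p).
- by rewrite /= Ap.
- by rewrite /= Aq.
- by rewrite /= Aq.
- by rewrite /= Ap.
- by move=> j /=; rewrite Ap Aq; exact: hxy.
Qed.

Definition sig k (f : {ffun 'I_k -> bool}) (r : 'I_(k.*2)) : 'I_(k.*2) :=
  if f (levo r) then rev_ord r else r.

Lemma sigK k (f : {ffun 'I_k -> bool}) : involutive (sig f).
Proof.
move=> r; rewrite /sig; case E: (f (levo r)); last by rewrite E.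
by rewrite levo_rev E rev_ordK.
Qed.

Lemma lev_sig k (f : {ffun 'I_k -> bool}) r : lev k (sig f r) = lev k r.
Proof. by rewrite /sig; case: ifP => // _; rewrite lev_rev. Qed.

Definition Sw k n (I I' : nat -> {set 'I_n}) (f : {ffun 'I_k -> bool}) : 'M[bool]_(k.*2, n) :=
  \matrix_(r, j) stackA k I I' (sig f r) j.

Lemma Sw_E k n (I I' : nat -> {set 'I_n}) (f : {ffun 'I_k -> bool}) (r : 'I_(k.*2)) j : Sw I I' f r j = stackA k I I' (sig f r) j.
Proof. by rewrite mxE. Qed.

Lemma rowsum_rev k n (I I' : nat -> {set 'I_n}) : Hsp k I I' ->
  forall r, rowsum (stackA k I I') (rev_ord r) = rowsum (stackA k I I') r.
Proof.
move=> Hs r.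
suff key : forall o : 'I_k, rowsum (stackA k I I') (rev_ord (pr o)) = rowsum (stackA k I I') (pr o).
  by case: (pr_cases r) => ->; rewrite ?rev_ordK key.
move=> o; have [_ _ [x [y [xI xJ yJ yI hxy]]]] := level_props Hs o.
have nxy : x != y by apply/eqP => e; move: xJ; rewrite e yJ.
rewrite /rowsum (sum_split2 _ nxy) (sum_split2 (fun j => (stackA k I I' (pr o) j : nat)) nxy).
rewrite !(A_pr I I' o x).1 !(A_pr I I' o x).2 !(A_pr I I' o y).1 !(A_pr I I' o y).2.
rewrite xI (negbTE xJ) yJ (negbTE yI) /=; congr (_ + _); apply: eq_bigr => j /andP[jx jy].
rewrite (A_pr I I' o j).1 (A_pr I I' o j).2.
apply/eqP; apply/negPn/negP => hne.
have hne' : (j \in I o.+1) != (j \in I' o.+1) by move: hne; case: (_ \in _); case: (_ \in _).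
by case: (hxy j hne') => e; [move: jx|move: jy]; rewrite e eqxx.
Qed.

Lemma Sw_in k n (I I' : nat -> {set 'I_n}) : Hsp k I I' -> forall f,
  inAR (rowsum (stackA k I I')) (colsum (stackA k I I')) (Sw I I' f).
Proof.
move=> Hs f; apply/andP; split; apply/forallP => i; apply/eqP.
  rewrite /rowsum /Sw; under eq_bigr => j _ do rewrite mxE.
  rewrite -/(rowsum (stackA k I I') (sig f i)) /sig; case: ifP => // _.
  exact: rowsum_rev.
rewrite /colsum /Sw; under eq_bigr => r _ do rewrite mxE.
exact: (esym (reindex_inj (can_inj (sigK f)) (F := fun r => (stackA k I I' r i : nat)))).
Qed.

Lemma Sw_inj k n (I I' : nat -> {set 'I_n}) : Hsp k I I' -> injective (Sw I I' (k := k)).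
Proof.
move=> Hs f g e; apply/ffunP => o.
have [_ _ [x [y [xI xJ yJ yI hxy]]]] := level_props Hs o.
have := congr1 (fun M : 'M[bool]_(k.*2, n) => M (pr o) x) e.
rewrite /= !Sw_E /sig !levo_pr.
by case: (f o); case: (g o) => //=; rewrite (A_pr I I' o x).1 (A_pr I I' o x).2 xI (negbTE xJ).
Qed.

Lemma tent k i1 i i2 : i1 <= i <= i2 -> i2 < k.*2 -> lev k i <= lev k i1 -> lev k i <= lev k i2 ->
  i = i1 \/ i = i2.
Proof. rewrite /lev; case: ifP; case: ifP; case: ifP; lia. Qed.

Lemma Sw_convex k n (I I' : nat -> {set 'I_n}) : Hsp k I I' -> Hne k I I' -> forall f : {ffun 'I_k -> bool},
  convex (Sw I I' f).
Proof.
move=> Hs Hn f; split.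
  move=> i j1 j j2 hj; rewrite !Sw_E !stackA_lev.
  have [c1 c2 _] := level_props Hs (levo (sig f i)).
  by case: ifP => _; [apply: c1 | apply: c2].
move=> j i1 i i2 hi; rewrite !Sw_E.
have pos : forall r, stackA k I I' (sig f r) j -> 0 < sv I I' (lev k r) j.
  by move=> r h; have [h1 _ _ _] := Arow I I' (sig f r) j; rewrite -(lev_sig f) h1.
have two : forall r : 'I_(k.*2), sv I I' (lev k r) j = 2 -> stackA k I I' (sig f r) j.
  by move=> r h; have [_ _ h3 _] := Arow I I' (sig f r) j; apply: h3; rewrite lev_sig.
move=> H1 H2; have h1 := pos _ H1; have h2 := pos _ H2.
have hli := lev_lt i; have hl1 := lev_lt i1; have hl2 := lev_lt i2.
case: (ltnP (lev k i1) (lev k i)) => c1.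
  apply: two; apply: (sv_mono Hn (l := lev k i1)) => //; lia.
case: (ltnP (lev k i2) (lev k i)) => c2.
  apply: two; apply: (sv_mono Hn (l := lev k i2)) => //; lia.
have [e|e] := tent hi (ltn_ord i2) c1 c2.
  by have -> : i = i1 := val_inj e.
by have -> : i = i2 := val_inj e.
Qed.

Lemma charM k n (I I' : nat -> {set 'I_n}) : Hsp k I I' -> Hne k I I' ->
  forall M, inAR (rowsum (stackA k I I')) (colsum (stackA k I I')) M ->
  exists f, M = Sw I I' f.
Proof.
move=> Hs Hn M hM.
exists [ffun o => ~~ [forall j, M (pr o) j == stackA k I I' (pr o) j]].
apply/matrixP => r j; rewrite Sw_E /sig ffunE.
set o := levo r.
have [_ _ [x [y [xI xJ yJ yI hxy]]]] := level_props Hs o.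
case: (pair_level Hs Hn hM o) => [[h1 h2]|[h1 h2]].
  have -> : [forall j, M (pr o) j == stackA k I I' (pr o) j].
    by apply/forallP => j'; rewrite h1.
  by case: (pr_cases r) => e; rewrite -/o e ?h1 ?h2.
have -> : [forall j, M (pr o) j == stackA k I I' (pr o) j] = false.
  apply/negbTE/negP => /forallP /(_ x); rewrite h1 (A_pr I I' o x).1 (A_pr I I' o x).2.
  by rewrite xI (negbTE xJ).
by case: (pr_cases r) => e; rewrite -/o e /= ?rev_ordK ?h1 ?h2.
Qed.

Theorem mainTheorem10 (k n : nat) (I I' : nat -> {set 'I_n}) :
  1 <= k -> 1 <= n ->
  (forall i, 1 <= i <= k -> shift_pair (I i) (I' i)) ->
  (forall i, 2 <= i <= k -> (I i.-1 :|: I' i.-1) \subset (I i :&: I' i)) ->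
  (forall j : 'I_n, exists r : 'I_(k.*2), stackA k I I' r j) ->
  convex_class (rowsum (stackA k I I')) (colsum (stackA k I I')) /\
  #|[set M : 'M[bool]_(k.*2, n) |
      inAR (rowsum (stackA k I I')) (colsum (stackA k I I')) M]| = 2 ^ k.
Proof.
move=> _ _ Hs Hn _; split.
  move=> M hM; have [f ->] := charM Hs Hn hM; exact: Sw_convex.
have -> : [set M : 'M[bool]_(k.*2, n) |
      inAR (rowsum (stackA k I I')) (colsum (stackA k I I')) M] =
      [set Sw I I' f | f in [set: {ffun 'I_k -> bool}]].
  apply/setP => M; rewrite inE; apply/idP/imsetP.
    by move=> hM; have [f ->] := charM Hs Hn hM; exists f; rewrite ?inE.
  by case=> f _ ->; exact: Sw_in.
by rewrite card_imset; [rewrite cardsT card_ffun card_bool card_ord | exact: Sw_inj].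
Qed.
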